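(* Let $0<\alpha<1$. Let $P,Q$ be probability measures on $\mathbb{R}^d$, both absolutely continuous with respect to a probability measure $\mu$. Let $\mathbf{x}_1,\dots,\mathbf{x}_N\in\mathbb{R}^d$ with $q_i:=\frac{dQ}{d\mu}(\mathbf{x}_i)>0$ and $p_i:=\frac{dP}{d\mu}(\mathbf{x}_i)>0$ for $1\le i\le N$. For $L>0$ let $I_L^i=[-L-\log\frac{q_i}{p_i},\,L-\log\frac{q_i}{p_i}]$ and define $f^{(N)}:I_L^1\times\cdots\times I_L^N\to\mathbb{R}$ by $$f^{(N)}(\mathbf{t})=f^{(N)}(t_1,\dots,t_N)=\frac{1}{\alpha}\frac{1}{N}\sum_{i=1}^N e^{\alpha t_i}q_i+\frac{1}{1-\alpha}\frac{1}{N}\sum_{i=1}^N e^{(\alpha-1)t_i}p_i .$$ Let $\frac{\lambda}{2}=\frac{1}{N}\min_{1\le i\le N}\big\{e^{-L}q_i^{1-\alpha}p_i^{\alpha}\big\}$. Then for all $\mathbf{t}$ in the domain, $$\mathbf{t}^{T}\,\nabla^2 f^{(N)}(\mathbf{t})\,\mathbf{t}=\sum_{1\le i,j\le N}t_it_j\frac{\partial^2 f^{(N)}}{\partial t_i\partial t_j}(\mathbf{t})\ge\frac{\lambda}{2}\|\mathbf{t}\|^2 .$$ Moreover, with $D_i=2e^{L}q_i^{1-\alpha}p_i^{\alpha}$ and $D=\max\{D_1,\dots,D_N\}$, we have $\|\nabla f^{(N)}(\mathbf{t})\|^2\le D^2$ for all $\mathbf{t}\in I_L^1\times\cdots\times I_L^N$,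 and $f^{(N)}$ is minimized at $\mathbf{t}_*=(-\log\frac{q_1}{p_1},\dots,-\log\frac{q_N}{p_N})$.
   Context: $\|\cdot\|$ is the Euclidean norm; $\frac{dQ}{d\mu},\frac{dP}{d\mu}$ are Radon–Nikodým derivatives. *)

(* Defs.v *)
From HB Require Import structures.
From mathcomp Require Import all_boot all_order all_algebra.
From mathcomp Require Import all_classical all_reals all_analysis.
Set Implicit Arguments. Unset Strict Implicit. Unset Printing Implicit Defensive.
Import Order.TTheory GRing.Theory Num.Theory.
Import numFieldNormedType.Exports.
Local Open Scope ring_scope.

Definition rcoord (R : realType) (N : nat) (t : 'rV[R]_N) (i : 'I_N) : R := t ord0 i.

Definition basis_vec (R : realType) (N : nat) (i : 'I_N) : 'rV[R]_N := delta_mx 0 i.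

Definition fN (R : realType) (N : nat) (alpha : R) (q p : 'I_N -> R)
    (t : 'rV[R]_N) : R :=
  alpha^-1 * (N%:R)^-1 * (\sum_(i < N) expR (alpha * rcoord t i) * q i)
  + (1 - alpha)^-1 * (N%:R)^-1 * (\sum_(i < N) expR ((alpha - 1) * rcoord t i) * p i).

Definition partial (R : realType) (N : nat) (f : 'rV[R]_N -> R) (i : 'I_N)
    (t : 'rV[R]_N) : R := derive f t (@basis_vec R N i).

Definition partial2 (R : realType) (N : nat) (f : 'rV[R]_N -> R) (i j : 'I_N)
    (t : 'rV[R]_N) : R := partial (partial f j) i t.

Definition sqnorm (R : realType) (N : nat) (t : 'rV[R]_N) : R :=
  \sum_(i < N) rcoord t i ^+ 2.

Definition box (R : realType) (N : nat) (L : R) (q p : 'I_N -> R) : set 'rV[R]_N :=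
  [set t | forall i : 'I_N,
     - L - ln (q i / p i) <= rcoord t i <= L - ln (q i / p i)].

(* Main.v *)
Require Import Defs.
From HB Require Import structures.
From mathcomp Require Import all_boot all_order all_algebra.
From mathcomp Require Import all_classical all_reals all_analysis.
Import Order.TTheory GRing.Theory Num.Theory.
Import numFieldNormedType.Exports.
Local Open Scope classical_set_scope.
From mathcomp Require Import ring lra.
Local Open Scope ring_scope.

Lemma partial_1d (R : realType) (N : nat) (F : 'rV[R]_N -> R) (i : 'I_N) t (G : R -> R) :
  (forall h, F (h *: basis_vec R i + t) = G h) -> partial F i t = derive G 0 1.
Proof.
move=> hG; rewrite /partial /derive.
have -> : F t = G 0 by rewrite -(hG 0) scale0r add0r.
have E : (fun h : R => h^-1 *: ((F \o shift t) (h *: basis_vec R i) - G 0)) =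
  (fun h : R => h^-1 *: ((G \o shift 0) (h *: 1) - G 0)).
  apply/funext => h /=.
  by rewrite hG addr0 /GRing.scale /= mulr1.
by rewrite E.
Qed.

Lemma is_derive_expR_aff (R : realType) (a b x : R) :
  is_derive x 1 (fun h => expR (a * h + b)) (a * expR (a * x + b)).
Proof.
have hi : is_derive x (1:R) (fun h : R => a * h + b) a.
  have := is_deriveD (is_deriveZ a (is_derive_id x (1:R))) (is_derive_cst b x 1).
  by rewrite /GRing.scale /= mulr1 addr0.
have dc : derivable (fun h => expR (a * h + b)) x 1.
  apply/derivable1_diffP; apply: (@differentiable_comp _ _ _ _ (fun h : R => a * h + b) expR).
    by apply/derivable1_diffP; case: hi.
  by apply/derivable1_diffP; exact: derivable_expR.
apply: DeriveDef => //.
rewrite -derive1E (@derive1_comp _ (fun h : R => a * h + b) expR).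
- rewrite !derive1E (@derive_val _ _ _ _ _ _ _ hi).
  by rewrite (@derive_val _ _ _ _ _ _ _ (is_derive_expR _)) mulrC.
- by case: hi.
- exact: derivable_expR.
Qed.

Lemma rcoord_shift (R : realType) N (t : 'rV[R]_N) i h k :
  rcoord (h *: basis_vec R i + t) k = (if k == i then h + rcoord t k else rcoord t k).
Proof.
rewrite /rcoord /basis_vec !mxE eqxx /=; case: eqP => _ /=.
  by rewrite mulr1.
by rewrite mulr0 add0r.
Qed.

Lemma is_derive_G (R : realType) (A B a b c d q p S1 S2 x : R) :
  is_derive x 1 (fun h => A * (expR (a * h + b) * q + S1) + B * (expR (c * h + d) * p + S2))
    (A * (a * expR (a * x + b) * q) + B * (c * expR (c * x + d) * p)).
Proof.
have e1 := @is_derive_expR_aff R a b x; have e2 := @is_derive_expR_aff R c d x.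
have := is_deriveD (is_deriveZ A (is_deriveD (is_deriveZ q e1) (is_derive_cst S1 x 1)))
   (is_deriveZ B (is_deriveD (is_deriveZ p e2) (is_derive_cst S2 x 1))).
set F := (_ + _ : R -> R).
have -> : F = (fun h => A * (expR (a * h + b) * q + S1) + B * (expR (c * h + d) * p + S2)).
  apply/funext => h; rewrite /F /=.
  change (A * (q * expR (a*h+b) + S1) + B * (p * expR (c*h+d) + S2) = A * (expR (a * h + b) * q + S1) + B * (expR (c * h + d) * p + S2)).
  by rewrite [q * _]mulrC [p * _]mulrC.
move=> H; apply: is_derive_eq H _; rewrite /GRing.scale /= !addr0.
by rewrite [q * _]mulrC [p * _]mulrC.
Qed.

Lemma partial_fN (R : realType) N (a : R) (q p : 'I_N -> R) (ha0 : a != 0) (ha1 : 1 - a != 0) i t :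
 partial (fN a q p) i t =
   (N%:R)^-1 * (expR (a * rcoord t i) * q i - expR ((a - 1) * rcoord t i) * p i).
Proof.
rewrite (@partial_1d R N _ i t (fun h => fN a q p (h *: basis_vec R i + t))) //.
set S1 := \sum_(k < N | k != i) expR (a * rcoord t k) * q k.
set S2 := \sum_(k < N | k != i) expR ((a - 1) * rcoord t k) * p k.
have -> : (fun h => fN a q p (h *: basis_vec R i + t)) = (fun h =>
   (a^-1 * (N%:R)^-1) * (expR (a * h + a * rcoord t i) * q i + S1) +
   ((1 - a)^-1 * (N%:R)^-1) * (expR ((a - 1) * h + (a - 1) * rcoord t i) * p i + S2)).
  apply/funext => h; rewrite /fN (bigD1 i) //= [X in _ + _ * X](bigD1 i) //=.
  rewrite !rcoord_shift eqxx !mulrDr; congr (_ + _ * _ + (_ + _ * _)).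
    by apply: eq_bigr => k hk; rewrite rcoord_shift (negbTE hk).
  by apply: eq_bigr => k hk; rewrite rcoord_shift (negbTE hk).
rewrite (@derive_val _ _ _ _ _ _ _ (@is_derive_G R _ _ _ _ _ _ _ _ _ _ 0)).
rewrite !mulr0 !add0r.
have hN : (N%:R : R) != 0 by rewrite pnatr_eq0 -lt0n; case: (i) => k hk; exact: leq_ltn_trans hk.
field.
by rewrite hN ha0 ha1.
Qed.

Lemma partial2_fN (R : realType) N (a : R) (q p : 'I_N -> R) (ha0 : a != 0) (ha1 : 1 - a != 0) i j t :
 partial2 (fN a q p) i j t = if i == j then
   (N%:R)^-1 * (a * expR (a * rcoord t i) * q i + (1 - a) * expR ((a - 1) * rcoord t i) * p i)
   else 0.
Proof.
rewrite /partial2.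
have -> : partial (fN a q p) j = (fun s => (N%:R)^-1 *
   (expR (a * rcoord s j) * q j - expR ((a - 1) * rcoord s j) * p j)).
  by apply/funext => s; rewrite partial_fN.
rewrite (@partial_1d R N _ i t (fun h => (N%:R)^-1 *
   (expR (a * rcoord (h *: basis_vec R i + t) j) * q j
    - expR ((a - 1) * rcoord (h *: basis_vec R i + t) j) * p j))) //.
case: eqP => [<-|/eqP hij].
  have -> : (fun h => (N%:R)^-1 *
   (expR (a * rcoord (h *: basis_vec R i + t) i) * q i
    - expR ((a - 1) * rcoord (h *: basis_vec R i + t) i) * p i)) =
   (fun h => (N%:R)^-1 * (expR (a * h + a * rcoord t i) * q i + 0) +
      (- (N%:R)^-1) * (expR ((a - 1) * h + (a - 1) * rcoord t i) * p i + 0)).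
    apply/funext => h; rewrite !rcoord_shift eqxx !addr0.
  by rewrite !mulrDr mulrN mulNr.
  rewrite (@derive_val _ _ _ _ _ _ _ (@is_derive_G R _ _ _ _ _ _ _ _ _ _ 0)).
  rewrite !mulr0 !add0r; ring.
have -> : (fun h => (N%:R)^-1 *
   (expR (a * rcoord (h *: basis_vec R i + t) j) * q j
    - expR ((a - 1) * rcoord (h *: basis_vec R i + t) j) * p j)) =
   cst ((N%:R)^-1 * (expR (a * rcoord t j) * q j - expR ((a - 1) * rcoord t j) * p j)).
  apply/funext => h; rewrite !rcoord_shift /=.
  by have -> : (j == i) = false by apply/negbTE; rewrite eq_sym.
exact: derive_cst.
Qed.

Lemma key (R : realType) (a qi pi t : R) : 0 < qi -> 0 < pi ->
  expR (a * t) * qi = expR (a * (t + ln (qi / pi))) * (qi `^ (1 - a) * pi `^ a) /\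
  expR ((a - 1) * t) * pi = expR ((a - 1) * (t + ln (qi / pi))) * (qi `^ (1 - a) * pi `^ a).
Proof.
move=> hq hp.
have hq' : qi \is Num.pos by rewrite qualifE.
have hp' : pi \is Num.pos by rewrite qualifE.
rewrite /powR (gt_eqF hq) (gt_eqF hp) ln_div // -!expRD.
split.
  rewrite -{1}(lnK hq') -expRD; congr expR; ring.
rewrite -{1}(lnK hp') -expRD; congr expR; ring.
Qed.

Theorem corollary1 (R : realType) (dim : nat) (n : nat)
  (alpha : R) (halpha : 0 < alpha < 1)
  (mu P Q : probability (dim.-tuple R) R)
  (hPac : P `<< mu) (hQac : Q `<< mu)
  (dPdmu dQdmu : dim.-tuple R -> R)
  (hdP_meas : measurable_fun setT dPdmu) (hdP_ge0 : forall y, 0 <= dPdmu y)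
  (hdP : forall A, measurable A -> P A = (\int[mu]_(y in A) (dPdmu y)%:E)%E)
  (hdQ_meas : measurable_fun setT dQdmu) (hdQ_ge0 : forall y, 0 <= dQdmu y)
  (hdQ : forall A, measurable A -> Q A = (\int[mu]_(y in A) (dQdmu y)%:E)%E)
  (x : 'I_n.+1 -> dim.-tuple R)
  (hq : forall i, 0 < dQdmu (x i)) (hp : forall i, 0 < dPdmu (x i))
  (L : R) (hL : 0 < L) :
  let q := fun i => dQdmu (x i) in
  let p := fun i => dPdmu (x i) in
  let f := fN alpha q p in
  let lambda_half := (n.+1%:R)^-1 *
      \big[Num.min/expR (- L) * q ord0 `^ (1 - alpha) * p ord0 `^ alpha]_(i < n.+1)
         (expR (- L) * q i `^ (1 - alpha) * p i `^ alpha) in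
  let Dc := fun i => 2 * expR L * q i `^ (1 - alpha) * p i `^ alpha in
  let D := \big[Num.max/Dc ord0]_(i < n.+1) Dc i in
  let tstar : 'rV[R]_n.+1 := \row_(i < n.+1) (- ln (q i / p i)) in
  (forall t, box L q p t ->
     \sum_(i < n.+1) \sum_(j < n.+1) rcoord t i * rcoord t j * partial2 f i j t
       >= lambda_half * sqnorm t)
  /\ (forall t, box L q p t ->
     \sum_(i < n.+1) partial f i t ^+ 2 <= D ^+ 2)
  /\ (box L q p tstar /\ forall t, box L q p t -> f tstar <= f t).

Proof.
move=> q p f lh Dc D ts.
have a0 : 0 < alpha by case/andP: halpha.
have a1 : alpha < 1 by case/andP: halpha.
have ha0 : alpha != 0 by rewrite gt_eqF.
have ha1 : 1 - alpha != 0 by rewrite subr_eq0 eq_sym lt_eqF.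
have hN : 0 < (n.+1%:R : R) by rewrite ltr0Sn.
have hq' : forall i, 0 < q i := hq.
have hp' : forall i, 0 < p i := hp.
pose c := fun i => q i `^ (1 - alpha) * p i `^ alpha.
have cpos : forall i, 0 < c i by move=> i; rewrite /c mulr_gt0 // powR_gt0.
have eL : forall s, -L <= s <= L ->
   (expR (-L) <= expR (alpha * s) <= expR L) /\ (expR (-L) <= expR ((alpha - 1) * s) <= expR L).
  move=> s /andP[h1 h2]; rewrite !ler_expR; split; apply/andP; split; nra.
have box_s : forall t i, box L q p t -> -L <= rcoord t i + ln (q i / p i) <= L.
  move=> t i /(_ i) /andP[h1 h2]; apply/andP; split; lra.
split; [|split].
- move=> t bt.
  rewrite /sqnorm mulr_sumr; apply: ler_sum => i _.
  rewrite (bigD1 i) //= big1 => [|j /negbTE hji]; last first.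
    by rewrite /f partial2_fN // eq_sym hji mulr0.
  rewrite addr0 /f partial2_fN // eqxx.
  have [k1 k2] := @key R alpha (q i) (p i) (rcoord t i) (hq' i) (hp' i).
  rewrite -(mulrA alpha) k1 -(mulrA (1 - alpha)) k2.
  have [/andP[e1 e1'] /andP[e2 e2']] := eL _ (box_s t i bt).
  rewrite -expr2 [X in _ <= X]mulrC; apply: ler_wpM2r; first exact: sqr_ge0.
  rewrite /lh; apply: ler_wpM2l; first by rewrite invr_ge0 ltW.
  apply: le_trans (bigmin_le _ i _) _.
  rewrite -mulrA -/(c i).
  set E1 := expR (alpha * _) in e1 e1' *; set E2 := expR ((alpha - 1) * _) in e2 e2' *.
  have hX : expR (-L) <= alpha * E1 + (1 - alpha) * E2 by nra.
  have := ler_wpM2l (ltW (cpos i)) hX; lra.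
- move=> t bt.
  have hD : forall i, Dc i <= D by move=> i; rewrite /D; exact: le_bigmax.
  have -> : D ^+ 2 = \sum_(i < n.+1) ((n.+1%:R)^-1 * D ^+ 2).
    rewrite sumr_const card_ord -[RHS]mulr_natl mulrA mulfV ?mul1r // gt_eqF.
  apply: ler_sum => i _.
  rewrite /f partial_fN //.
  have [k1 k2] := @key R alpha (q i) (p i) (rcoord t i) (hq' i) (hp' i).
  rewrite k1 k2 -/(c i).
  have [/andP[e1 e1'] /andP[e2 e2']] := eL _ (box_s t i bt).
  set E1 := expR (alpha * _) in e1 e1' *; set E2 := expR ((alpha - 1) * _) in e2 e2' *.
  have hDc : 2 * expR L * c i <= D by rewrite /c mulrA; exact: hD i.
  have eLp : 0 < expR (- L) := expR_gt0 _.
  have hw : (E1 - E2) ^+ 2 <= expR L ^+ 2 by nra.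
  have ci := cpos i.
  have hce : 0 <= c i * expR L by rewrite mulr_ge0 // ltW // expR_gt0.
  have hcw : (c i * (E1 - E2)) ^+ 2 <= D ^+ 2.
    rewrite exprMn; apply: le_trans (ler_wpM2l (sqr_ge0 (c i)) hw) _.
    rewrite -exprMn; nra.
  have u1 : (n.+1%:R : R)^-1 <= 1 by rewrite invf_le1 // ler1n.
  have u0 : 0 < (n.+1%:R : R)^-1 by rewrite invr_gt0.
  have -> : (n.+1%:R)^-1 * (E1 * c i - E2 * c i) = (n.+1%:R : R)^-1 * (c i * (E1 - E2)) by ring.
  rewrite exprMn; apply: le_trans (ler_wpM2l (sqr_ge0 _) hcw) _.
  apply: ler_wpM2r; first exact: sqr_ge0.
  by have := ler_wpM2l (ltW u0) u1; rewrite mulr1 expr2.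
- have tsc : forall i, rcoord ts i = - ln (q i / p i) by move=> i; rewrite /rcoord mxE.
  split.
    by move=> i; rewrite tsc; apply/andP; split; lra.
  move=> t _.
  rewrite /f /fN !mulr_sumr -!big_split /=; apply: ler_sum => i _.
  rewrite tsc.
  have [k1 k2] := @key R alpha (q i) (p i) (rcoord t i) (hq' i) (hp' i).
  have [k1' k2'] := @key R alpha (q i) (p i) (- ln (q i / p i)) (hq' i) (hp' i).
  rewrite k1 k2 k1' k2' addNr !mulr0 expR0 -/(c i).
  set s := rcoord t i + _.
  have h1 := expR_ge1Dx (alpha * s); have h2 := expR_ge1Dx ((alpha - 1) * s).
  set A := alpha^-1 * _; set B := (1 - alpha)^-1 * _.
  have hA : A * alpha = (n.+1%:R)^-1 by rewrite /A; field; rewrite ha0 gt_eqF.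
  have hB : B * (1 - alpha) = (n.+1%:R)^-1 by rewrite /B; field; rewrite ha1 gt_eqF.
  have A0 : 0 <= A by rewrite /A mulr_ge0 // invr_ge0 ltW // ?subr_gt0.
  have B0 : 0 <= B by rewrite /B mulr_ge0 // invr_ge0 ltW // ?subr_gt0.
  have ci := cpos i.
  have i1 : A * ((1 + alpha * s) * c i) <= A * (expR (alpha * s) * c i).
    by apply: ler_wpM2l => //; apply: ler_wpM2r => //; exact: ltW.
  have i2 : B * ((1 + (alpha - 1) * s) * c i) <= B * (expR ((alpha - 1) * s) * c i).
    by apply: ler_wpM2l => //; apply: ler_wpM2r => //; exact: ltW.
  have f1 : A * ((1 + alpha * s) * c i) = A * (1 * c i) + (n.+1%:R)^-1 * s * c i.
    by rewrite -hA; ring.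
  have f2 : B * ((1 + (alpha - 1) * s) * c i) = B * (1 * c i) - (n.+1%:R)^-1 * s * c i.
    by rewrite -hB; ring.
  apply: le_trans (lerD i1 i2); by rewrite f1 f2 addrACA subrr addr0.
Qed.
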